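(* Let $E$ be a finite nonempty set, $f:2^E\to\mathbb{N}$ an integral polymatroid rank function, $d\in\mathbb{N}$, $\vec t\in\mathbb{N}^E$, and let $C_e:\mathbb{N}\times\mathbb{N}\to\mathbb{R}_+$, $e\in E$, be regular functions. Let $\vec x$ be an optimal solution of $P(\vec t,d)$, let $e^*\in E$ and $\vec t'=\vec t+\chi_{e^*}$. Define $g^*\in\arg\min_{g\in D_{e^*}(\vec x)} C^+_g(x_g;t_g)$ if $D_{e^*}(\vec x)\neq\emptyset$, and $g^*=e^*$ otherwise. Then the better (with respect to the objective of $P(\vec t',d)$) of the two solutions $\vec x$ and $\vec x-\chi_{e^*}+\chi_{g^*}$ is an optimal solution of $P(\vec t',d)$.
   Context: $\mathbb{N}=\{0,1,2,\dots\}$. A set function $f:2^E\to\mathbb{N}$ is an integral polymatroid rank function if $f(\emptyset)=0$, $f(U)\le f(V)$ for $U\subseteq V$, and $f(U)+f(V)\ge f(U\cup V)+f(U\cap V)$ for all $U,V\subseteq E$. For $\vec x\in\mathbb{N}^E$ and $U\subseteq E$, $x(U)=\sum_{e\in U}x_e$. For $d\in\mathbb{N}$, $\mathbb{B}_f(d)=\{\vec x\in\mathbb{N}^E: x(U)\le f(U)\ \forall U\subseteq E,\ x(E)=d\}$. $P(\vec t,d)$ denotes the problem: minimize $\sum_{e\in E}C_e(x_e;t_e)$ subject to $\vec x\in\mathbb{B}_f(d)$. For $C:\mathbb{N}\times\mathbb{N}\to\mathbb{R}$, $C^-(x;t)=C(x;t)-C(x-1;t)$ (for $x\ge1$) and $C^+(x;t)=C(x+1;t)-C(x;t)$.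 $C$ is regular if $C^-(x;t)\le C^-(x;t+1)$ and $C^-(x;t+1)\le C^-(x+1;t)$ for all $x\ge 1$, $t\in\mathbb{N}$. $\chi_e\in\mathbb{N}^E$ is the unit vector of coordinate $e$. For $\vec x\in\mathbb{B}_f(d)$ and $e\in E$, $D_e(\vec x)=\{g\in E\setminus\{e\}: \vec x+\chi_g-\chi_e\in\mathbb{B}_f(d)\}$. *)

(* Defs.v *)
From mathcomp Require Import all_boot all_order all_algebra.
Set Implicit Arguments. Unset Strict Implicit. Unset Printing Implicit Defensive.
Import Order.TTheory GRing.Theory Num.Theory.

Section Defs.
Variable E : finType.

Definition polymatroid (f : {set E} -> nat) : Prop :=
  [/\ f set0 = 0%N,
      (forall U V : {set E}, U \subset V -> (f U <= f V)%N) &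
      (forall U V : {set E}, (f (U :|: V) + f (U :&: V) <= f U + f V)%N)].

Definition xsum (x : E -> nat) (U : {set E}) : nat := (\sum_(e in U) x e)%N.

Definition inB (f : {set E} -> nat) (d : nat) (x : E -> nat) : Prop :=
  (forall U : {set E}, (xsum x U <= f U)%N) /\ xsum x [set: E] = d.

(* x + chi_g - chi_e  (adding first, then truncated subtraction; this is
   the exact vector whenever it lies in N^E) *)
Definition shift (x : E -> nat) (g e : E) : E -> nat :=
  fun a => (x a + (a == g) - (a == e))%N.

Definition Dset (f : {set E} -> nat) (d : nat) (x : E -> nat) (e : E) : E -> Prop :=
  fun g => g != e /\ inB f d (shift x g e).

Variable R : realFieldType.

Local Open Scope ring_scope.

Definition Cminus (C : nat -> nat -> R) (x t : nat) : R := C x t - C x.-1 t.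
Definition Cplus (C : nat -> nat -> R) (x t : nat) : R := C x.+1 t - C x t.

Definition regular (C : nat -> nat -> R) : Prop :=
  forall x t : nat, (1 <= x)%N ->
    Cminus C x t <= Cminus C x t.+1 /\ Cminus C x t.+1 <= Cminus C x.+1 t.

Definition obj (C : E -> nat -> nat -> R) (t x : E -> nat) : R :=
  \sum_(e : E) C e (x e) (t e).

Definition optimal (f : {set E} -> nat) (d : nat) (C : E -> nat -> nat -> R)
  (t x : E -> nat) : Prop :=
  inB f d x /\ forall y : E -> nat, inB f d y -> obj C t x <= obj C t y.

End Defs.

(* Main.v *)
Require Import Defs.
From mathcomp Require Import all_boot all_order all_algebra.
From mathcomp Require Import zify ring lra.
From Stdlib Require Import Classical.
Import Order.TTheory GRing.Theory Num.Theory.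
Set Implicit Arguments. Unset Strict Implicit.
Lemma xsumID (E : finType) (w : E -> nat) (A B : {set E}) :
  xsum w A = (xsum w (A :&: B) + xsum w (A :\: B))%N.
Proof. by rewrite /xsum (big_setID B). Qed.

Lemma xsum_mod (E : finType) (w : E -> nat) (U V : {set E}) :
  (xsum w (U :|: V) + xsum w (U :&: V) = xsum w U + xsum w V)%N.
Proof.
rewrite (xsumID w (U :|: V) U) (xsumID w V U).
have -> : (U :|: V) :&: U = U by apply/setP=> i; rewrite !inE; case: (i \in U); case: (i \in V).
have -> : (U :|: V) :\: U = V :\: U by apply/setP=> i; rewrite !inE; case: (i \in U); case: (i \in V).
have -> : V :&: U = U :&: V by rewrite setIC.
lia.
Qed.

Lemma tightUI (E : finType) (f : {set E} -> nat) (w : E -> nat) (U V : {set E}) :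
  polymatroid f -> (forall W, xsum w W <= f W)%N ->
  xsum w U = f U -> xsum w V = f V ->
  xsum w (U :|: V) = f (U :|: V) /\ xsum w (U :&: V) = f (U :&: V).
Proof.
case=> _ _ sub le hU hV.
have := xsum_mod w U V; have := sub U V; have := le (U :|: V); have := le (U :&: V).
lia.
Qed.

Lemma sum_eq1 (E : finType) (U : {set E}) (q : E) :
  (\sum_(e in U) (e == q) = (q \in U))%N.
Proof.
case: (boolP (q \in U)) => qU.
  rewrite (bigD1 q) //= eqxx big1 // => i /andP [_ /negbTE ->] //.
rewrite big1 // => i iU; case: eqP => // iq; by rewrite -iq iU in qU.
Qed.

Lemma xsum_shift (E : finType) (w : E -> nat) (p q : E) (U : {set E}) :
  p != q -> (0 < w q)%N ->
  (xsum (shift w p q) U + (q \in U) = xsum w U + (p \in U))%N.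
Proof.
move=> pq wq.
rewrite -!sum_eq1 /xsum -!big_split /=; apply: eq_bigr => i _.
rewrite /shift; case: (eqVneq i q) => [->|iq]; first by rewrite eq_sym (negbTE pq) ?eqxx; lia.
by rewrite /= subn0 addn0.
Qed.

Lemma shift_inB (E : finType) (f : {set E} -> nat) d (w : E -> nat) (p q : E) :
  inB f d w -> p != q -> (0 < w q)%N ->
  (forall U, xsum w U = f U -> p \in U -> q \in U) ->
  inB f d (shift w p q).
Proof.
move=> [le sm] pq wq H; split.
  move=> U; have := xsum_shift U pq wq; have := le U.
  case: (boolP (p \in U)) => pU; case: (boolP (q \in U)) => qU; try lia.
  have : xsum w U != f U by apply/eqP => /H /(_ pU); rewrite (negbTE qU).
  lia.
have := xsum_shift [set: E] pq wq; rewrite !inE; lia.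
Qed.

Lemma sum_strict (E : finType) (u v : E -> nat) (A : {set E}) a :
  (forall i, i \in A -> u i <= v i)%N -> a \in A -> (u a < v a)%N ->
  (xsum u A < xsum v A)%N.
Proof.
move=> H aA lt; rewrite /xsum (bigD1 a) //= [X in (_ < X)%N](bigD1 a) //=.
rewrite -addSn leq_add // leq_sum // => i /andP [iA _]; exact: H.
Qed.

Lemma exch (E : finType) (f : {set E} -> nat) d (x z : E -> nat) (a : E) :
  polymatroid f -> inB f d x -> inB f d z -> (x a < z a)%N ->
  exists b, [/\ (z b < x b)%N, inB f d (shift z b a) & inB f d (shift x a b)].
Proof.
move=> pf Bx Bz lt.
have pf' := pf; case: pf' => f0 _ sub.
case: (Bx) => lex sx; case: (Bz) => lez sz.
pose S := \bigcup_(U | (xsum z U == f U) && (a \notin U)) U.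
pose T := \bigcap_(U | (xsum x U == f U) && (a \in U)) U.
have [Stight aS] : xsum z S = f S /\ a \notin S.
  rewrite /S; apply: (big_ind (fun U => xsum z U = f U /\ a \notin U)).
  - by rewrite /xsum big_set0 f0 inE.
  - move=> U V [hU aU] [hV aV]; split; first by case: (tightUI pf lez hU hV).
    by rewrite inE negb_or aU aV.
  - by move=> U /andP [/eqP -> ->].
have [aT Ttight] : a \in T /\ (xsum x T = f T \/ T = setT).
  rewrite /T; apply: (@big_ind {set E} (fun U => a \in U /\ (xsum x U = f U \/ U = setT)) setT (@setI E)).
  - by rewrite inE; split=> //; right.
  - move=> U V [aU hU] [aV hV]; split; first by rewrite inE aU aV.
    case: hU => [hU|->]; last by rewrite setTI; exact: hV.
    case: hV => [hV|->]; last by rewrite setIT; left.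
    by left; case: (tightUI pf lex hU hV).
  - by move=> U /andP [/eqP -> ->]; split=> //; left.
have [b [bT bS zb]] : exists b, [/\ b \in T, b \notin S & (z b < x b)%N].
  case: (boolP [exists b, [&& b \in T, b \notin S & (z b < x b)%N]]).
    by move=> /existsP [b /and3P [h1 h2 h3]]; exists b.
  move=> /existsPn H; exfalso.
  have lt' : (xsum x (T :\: S) < xsum z (T :\: S))%N.
    apply: (sum_strict (a:=a)); last by [].
      move=> i; rewrite inE => /andP [iS iT]; have := H i; rewrite iS iT /=; lia.
    by rewrite inE aS aT.
  have e1 : (T :|: S) :&: S = S by apply/setP=> i; rewrite !inE; case: (i \in T); case: (i \in S).
  have e2 : (T :|: S) :\: S = T :\: S by apply/setP=> i; rewrite !inE; case: (i \in T); case: (i \in S).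
  case: Ttight => [Tt|TT].
    have := xsumID z (T :|: S) S; rewrite e1 e2 => h1.
    have := xsumID x T S => h2.
    have := sub T S; have := lez (T :|: S); have := lex (T :&: S); lia.
  have := xsumID z [set: E] S; have := xsumID x [set: E] S.
  rewrite !setTI sx sz -TT => h1 h2.
  have := lex S; lia.
have ba : b != a by apply/eqP => eba; rewrite eba in zb; lia.
exists b; split=> //.
  apply: shift_inB => //; first lia.
  move=> U hU bU; apply/negPn/negP => aU.
  have : b \in S by apply: (subsetP (bigcup_sup U (P := fun U => (xsum z U == f U) && (a \notin U)) _)) => //; rewrite hU eqxx aU.
  by rewrite (negbTE bS).
apply: shift_inB => //; first by rewrite eq_sym.
  lia.
move=> U hU aU.
by apply: (subsetP (bigcap_inf U (P := fun U => (xsum x U == f U) && (a \in U)) _)) => //; rewrite hU eqxx aU.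
Qed.
Local Open Scope ring_scope.
Lemma conv_mono (R : realFieldType) (C : nat -> nat -> R) (s p q : nat) :
  regular C -> (p <= q)%N -> Cplus C p s <= Cplus C q s.
Proof.
move=> rC; elim: q => [|q IH]; first by rewrite leqn0 => /eqP ->.
rewrite leq_eqVlt => /orP [/eqP -> //|]; rewrite ltnS => /IH h.
apply: le_trans h _.
have [h1 h2] := rC q.+1 s isT.
exact: le_trans h1 h2.
Qed.

Lemma reg2 (R : realFieldType) (C : nat -> nat -> R) (k s : nat) :
  regular C -> Cplus C k s.+1 <= Cplus C k.+1 s.
Proof. by move=> rC; have [_ h] := rC k.+1 s isT. Qed.

Lemma delta_mono (R : realFieldType) (C : nat -> nat -> R) (s k l : nat) :
  regular C -> (k <= l)%N -> C k s.+1 - C k s <= C l s.+1 - C l s.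
Proof.
move=> rC; elim: l => [|l IH]; first by rewrite leqn0 => /eqP ->.
rewrite leq_eqVlt => /orP [/eqP -> //|]; rewrite ltnS => /IH h.
apply: le_trans h _.
have [h1 _] := rC l.+1 s isT.
move: h1; rewrite /Cminus /=; lra.
Qed.

Lemma obj_shift (E : finType) (R : realFieldType) (C : E -> nat -> nat -> R)
  (t w : E -> nat) (p q : E) :
  p != q -> (0 < w q)%N ->
  obj C t (shift w p q) = obj C t w + Cplus (C p) (w p) (t p)
                          - Cplus (C q) (w q).-1 (t q).
Proof.
move=> pq wq.
suff H : obj C t (shift w p q) - obj C t w =
   Cplus (C p) (w p) (t p) - Cplus (C q) (w q).-1 (t q) by move: H; lra.
rewrite /obj -sumrB (bigD1 p) //= (bigD1 q) /=; last by rewrite eq_sym.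
rewrite big1; last first.
  move=> i /andP [ip iq]; rewrite /shift (negbTE ip) (negbTE iq) /= subn0 addn0.
  by rewrite subrr.
rewrite /shift eqxx (negbTE pq) eq_sym (negbTE pq) eqxx /= addn0 subn0 addn1 subn1.
rewrite /Cplus prednK //; lra.
Qed.

Lemma obj_t' (E : finType) (R : realFieldType) (C : E -> nat -> nat -> R)
  (t w : E -> nat) (e : E) :
  obj C (fun a => t a + (a == e))%N w
  = obj C t w + (C e (w e) (t e).+1 - C e (w e) (t e)).
Proof.
suff H : obj C (fun a => t a + (a == e))%N w - obj C t w =
   (C e (w e) (t e).+1 - C e (w e) (t e)) by move: H; lra.
rewrite /obj -sumrB (bigD1 e) //= big1; last first.
  by move=> i ie; rewrite (negbTE ie) addn0 subrr.
by rewrite eqxx addn1 addr0.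
Qed.

Definition meas (E : finType) (x z : E -> nat) : nat := (\sum_i (z i - x i))%N.

Lemma meas_shift (E : finType) (x z : E -> nat) (a b : E) :
  (x a < z a)%N -> (z b < x b)%N -> (meas x (shift z b a) < meas x z)%N.
Proof.
move=> lta ltb.
have ab : a != b by apply/eqP => eab; rewrite eab in lta; lia.
have H : meas x z = (meas x (shift z b a) + \sum_i (i == a))%N.
  rewrite /meas -big_split /=; apply: eq_bigr => i _.
  rewrite /shift; case: (eqVneq i a) => [->|ia]; first by rewrite (negbTE ab) /=; lia.
  case: (eqVneq i b) => [->|ib] /=; lia.
have H1 : (\sum_i (i == a) = 1)%N.
  rewrite (bigD1 a) //= eqxx big1 // => i /negbTE -> //.
rewrite H H1; lia.
Qed.

Lemma local_opt (E : finType) (R : realFieldType) f d (C : E -> nat -> nat -> R)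
  (t x : E -> nat) (p q : E) :
  optimal f d C t x -> p != q -> (0 < x q)%N -> inB f d (shift x p q) ->
  Cplus (C q) (x q).-1 (t q) <= Cplus (C p) (x p) (t p).
Proof.
move=> [_ opt] pq xq B; have := opt _ B; rewrite obj_shift //; lra.
Qed.

Lemma ex_above (E : finType) (f : {set E} -> nat) d (x z : E -> nat) (e : E) :
  polymatroid f -> inB f d x -> inB f d z -> (z e < x e)%N ->
  exists a, [/\ (x a < z a)%N, a != e & inB f d (shift x a e)].
Proof.
move=> pf Bx Bz lt; have [a [h1 h3 _]] := exch pf Bz Bx lt.
exists a; split => //; apply/eqP => ae; rewrite ae in h1; lia.
Qed.

Lemma claimG (E : finType) (R : realFieldType) f d (C : E -> nat -> nat -> R)
  (t x : E -> nat) (e g : E) :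
  polymatroid f -> (forall e, regular (C e)) -> optimal f d C t x ->
  Dset f d x e g ->
  (forall g', Dset f d x e g' -> Cplus (C g) (x g) (t g) <= Cplus (C g') (x g') (t g')) ->
  forall z, inB f d z -> (z e < x e)%N -> obj C t (shift x g e) <= obj C t z.
Proof.
move=> pf rC opt [ge Bg] Hmin.
have Bx := opt.1.
suff main : forall n z, (meas x z < n)%N -> inB f d z -> (z e < x e)%N ->
    obj C t (shift x g e) <= obj C t z.
  by move=> z; apply: (main (meas x z).+1).
elim=> [//|n IH] z hm Bz lt.
have [a [lta ae _]] := ex_above pf Bx Bz lt.
have [b [ltb Bz' Bx']] := exch pf Bx Bz lta.
have ab : a != b by apply/eqP => eab; rewrite eab in lta; lia.
have za : (0 < z a)%N by lia.
have cA : Cplus (C a) (x a) (t a) <= Cplus (C a) (z a).-1 (t a)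
  by apply: conv_mono => //; lia.
have xb0 : (0 < x b)%N by lia.
have lo := local_opt opt ab xb0 Bx'.
case: (eqVneq b e) => [be|be].
  subst b.
  have Da : Dset f d x e a by split.
  have hm' := Hmin a Da.
  have xe0 : (0 < x e)%N by lia.
  have ea : e != a by rewrite eq_sym.
  rewrite (@obj_shift _ _ C t x g e ge xe0); have := opt.2 _ Bz'; rewrite (@obj_shift _ _ C t z e a ea za).
  have cE : Cplus (C e) (z e) (t e) <= Cplus (C e) (x e).-1 (t e)
    by apply: conv_mono => //; lia.
  lra.
have hz' : obj C t (shift z b a) <= obj C t z.
  rewrite obj_shift // ?(eq_sym b) //.
  have cB : Cplus (C b) (z b) (t b) <= Cplus (C b) (x b).-1 (t b)
    by apply: conv_mono => //; lia.
  lra.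
apply: le_trans hz'; apply: IH => //.
  have := meas_shift lta ltb; lia.
rewrite /shift (eq_sym e b) (negbTE be) (eq_sym e a) (negbTE ae) /=; lia.
Qed.

Lemma claimM (E : finType) (R : realFieldType) f d (C : E -> nat -> nat -> R)
  (t x y : E -> nat) (e : E) :
  polymatroid f -> (forall e, regular (C e)) -> optimal f d C t x ->
  (forall z, inB f d z -> z e = (x e).-1 -> (z e < x e)%N ->
      obj C (fun a => t a + (a == e))%N y <= obj C (fun a => t a + (a == e))%N z) ->
  forall z, inB f d z ->
    obj C (fun a => t a + (a == e))%N x <= obj C (fun a => t a + (a == e))%N z \/
    obj C (fun a => t a + (a == e))%N y <= obj C (fun a => t a + (a == e))%N z.
Proof.
move=> pf rC opt HG.
have Bx := opt.1.
set t' := fun a => (t a + (a == e))%N.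
suff main : forall n z, (meas x z < n)%N -> inB f d z ->
    obj C t' x <= obj C t' z \/ obj C t' y <= obj C t' z.
  by move=> z; apply: (main (meas x z).+1).
elim=> [//|n IH] z hm Bz.
case: (leqP (x e) (z e)) => hxz.
  left; rewrite /t' !obj_t'.
  have := opt.2 _ Bz; have := delta_mono (t e) (rC e) hxz; lra.
case: (leqP (x e).-1 (z e)) => hz.
  right; apply: HG => //; lia.
have [a [lta ae _]] := ex_above pf Bx Bz hxz.
have [b [ltb Bz' Bx']] := exch pf Bx Bz lta.
have ab : a != b by apply/eqP => eab; rewrite eab in lta; lia.
have za : (0 < z a)%N by lia.
have cA : Cplus (C a) (x a) (t a) <= Cplus (C a) (z a).-1 (t a)
  by apply: conv_mono => //; lia.
have xb0 : (0 < x b)%N by lia.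
have lo := local_opt opt ab xb0 Bx'.
have cB : Cplus (C b) (z b) (t' b) <= Cplus (C b) (x b).-1 (t b).
  rewrite /t'; case: (eqVneq b e) => [->|be].
    rewrite ?eqxx /= ?addn1; apply: le_trans (reg2 _ _ (rC e)) _.
    apply: conv_mono => //; lia.
  rewrite /= ?addn0; apply: conv_mono => //; lia.
have hz' : obj C t' (shift z b a) <= obj C t' z.
  rewrite (@obj_shift _ _ C t' z b a) ?(eq_sym b) //.
  move: cB; rewrite /t' (negbTE ae) addn0 => cB'.
  lra.
have [h|h] := IH (shift z b a) ltac:(have := meas_shift lta ltb; lia) Bz'.
  by left; apply: le_trans hz'.
by right; apply: le_trans hz'.
Qed.

Theorem theorem3p2 (E : finType) (R : realFieldType)
  (f : {set E} -> nat) (d : nat) (t : E -> nat)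
  (C : E -> nat -> nat -> R) (x : E -> nat) (estar gstar : E) :
  (0 < #|E|)%N ->
  polymatroid f ->
  (forall e a b, 0 <= C e a b) ->
  (forall e, regular (C e)) ->
  optimal f d C t x ->
  ((exists g, Dset f d x estar g) ->
     Dset f d x estar gstar /\
     forall g, Dset f d x estar g ->
       Cplus (C gstar) (x gstar) (t gstar) <= Cplus (C g) (x g) (t g)) ->
  (~ (exists g, Dset f d x estar g) -> gstar = estar) ->
  let t' := fun a => (t a + (a == estar))%N in
  let y := shift x gstar estar in
  if obj C t' x <= obj C t' y then optimal f d C t' x else optimal f d C t' y.
Proof.
move=> _ pf _ rC opt HD HN t' y.
have Bx := opt.1.
have [By HG] : inB f d y /\
   (forall z, inB f d z -> z estar = (x estar).-1 -> (z estar < x estar)%N ->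
      obj C t' y <= obj C t' z).
  case: (classic (exists g, Dset f d x estar g)) => [ex|nex].
    have [[ge By] Hmin] := HD ex.
    split=> // z Bz hze hlt.
    have yz : y estar = z estar.
      by rewrite /y /shift eqxx eq_sym (negbTE ge) hze /=; lia.
    rewrite /t' !obj_t' yz.
    have := claimG pf rC opt (conj ge By) Hmin Bz hlt; lra.
  have gs := HN nex.
  split.
    have ey : forall U, xsum y U = xsum x U.
      by move=> U; apply: eq_bigr => i _; rewrite /y /shift gs addnK.
    by split; [move=> U; rewrite ey; exact: opt.1.1 | rewrite ey; exact: opt.1.2].
  move=> z Bz _ hlt; exfalso; apply: nex.
  have [a [_ ae Ba]] := ex_above pf Bx Bz hlt.
  by exists a; split.
have M := claimM pf rC opt HG.
case: ifP => hxy.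
  split=> // z Bz; case: (M z Bz) => // h; exact: le_trans hxy h.
split=> // z Bz.
move/negbT: hxy; rewrite -ltNge => hyx.
case: (M z Bz) => // h; apply: le_trans h; exact: ltW.
Qed.
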